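(* Let $f:\mathbb{R}^n\to\mathbb{R}$ be differentiable, $L$-smooth and $m$-strongly convex ($0<m\le L$), with unique minimizer $x_*$ (so $\nabla f(x_* )=0$). Let $0<\mu<2$, $\delta>0$, $\alpha>0$, and let constants $0<c_1\le c_2<+\infty$ be given. Consider the adaptive fractional order gradient descent (AFOGD) iteration, started from $x_0,x_1\in\mathbb{R}^n$, $$x_{k+1}=x_k-\alpha\,\nabla f(x_k)\,\beta_k\,(\|x_k-x_{k-1}\|_2+\delta)^{1-\mu},$$ where the scalars $\beta_k>0$ are chosen so that $0<c_1\le \beta_k(\|x_k-x_{k-1}\|_2+\delta)^{1-\mu}\le c_2<+\infty$ for all $k$. Write it as the dynamical system $\xi_{k+1}=A\xi_k+Bu_k$, $y_k=C\xi_k$, $x_k=E\xi_k$ with $\xi_k=x_k$, $A=I_n$, $B=-\alpha I_n$, $C=I_n$, $E=I_n$ and input $u_k=\nabla f(x_k)\,\beta_k(\|x_k-x_{k-1}\|_2+\delta)^{1-\mu}$. Suppose: 1. there are fixed points $\xi_*,u_*,y_*$ with $\xi_*=A\xi_*+Bu_*$, $y_*=C\xi_*$, $u_*=\nabla f(y_* )\cdot(\text{the corresponding scaling})$ and $x_*=E\xi_*=y_*$; 2. there exists a symmetric matrix $N\in\mathbb{R}^{2n\times 2n}$ such that $e_k^\top N e_k\ge 0$ for all $k$, where $e_k=[(\xi_k-\xi_* )^\top,(u_k-u_* )^\top]^\top$; 3. there exist a constant $h\ge 0$, a constant $\rho\in(0,1)$, and a positive definite matrix $P$ (with the given $\alpha>0$)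 such that $M+hN\preceq 0$, where $$M=\begin{bmatrix}A^\top PA-\rho^2P & A^\top PB\\ B^\top PA & B^\top PB\end{bmatrix}.$$ Then the sequence $\{x_k\}$ converges $R$-linearly to $x_*$.
   Context: A differentiable $f$ is $L$-smooth if $\|\nabla f(x)-\nabla f(y)\|_2\le L\|x-y\|_2$ for all $x,y$, and $m$-strongly convex if $m\|x-y\|_2^2\le (x-y)^\top(\nabla f(x)-\nabla f(y))$ for all $x,y$. A sequence $\{x_k\}$ converges $R$-linearly to $x_*$ with rate $\rho\in(0,1)$ if there is a constant $c>0$ with $\|x_k-x_*\|_2\le c\rho^k$ for all $k\in\mathbb{N}_+$. $I_n$ is the $n\times n$ identity matrix; $\preceq 0$ means negative semidefinite. *)

(* Defs.v *)
From HB Require Import structures.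
From mathcomp Require Import all_boot all_order all_algebra.
From mathcomp Require Import all_classical all_reals all_analysis.
Set Implicit Arguments. Unset Strict Implicit. Unset Printing Implicit Defensive.
Import Order.TTheory GRing.Theory Num.Theory.
Import numFieldNormedType.Exports.
Local Open Scope ring_scope.

Section Defs.
Variable R : realType.

Definition norm2 (n : nat) (v : 'cV[R]_n) : R :=
  Num.sqrt (\sum_(i < n) (v i 0) ^+ 2).

Definition qform (n : nat) (v : 'cV[R]_n) (Q : 'M[R]_n) (w : 'cV[R]_n) : R :=
  (v^T *m Q *m w) 0 0.

Definition grad (n : nat) (f : 'cV[R]_n -> R) (x : 'cV[R]_n) : 'cV[R]_n :=
  \col_i ('d f x (delta_mx i 0 : 'cV[R]_n)).

Definition L_smooth (n : nat) (f : 'cV[R]_n -> R) (L : R) : Prop :=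
  forall x y, norm2 (grad f x - grad f y) <= L * norm2 (x - y).

Definition strongly_convex (n : nat) (f : 'cV[R]_n -> R) (m : R) : Prop :=
  forall x y, m * norm2 (x - y) ^+ 2 <= ((x - y)^T *m (grad f x - grad f y)) 0 0.

Definition sym_mx (n : nat) (Q : 'M[R]_n) : Prop := Q^T = Q.

Definition posdef (n : nat) (Q : 'M[R]_n) : Prop :=
  Q^T = Q /\ forall v : 'cV[R]_n, v != 0 -> 0 < qform v Q v.

Definition nsd (n : nat) (Q : 'M[R]_n) : Prop :=
  forall v : 'cV[R]_n, qform v Q v <= 0.

End Defs.

(* Main.v *)
Require Import Defs.
From HB Require Import structures.
From mathcomp Require Import all_boot all_order all_algebra.
From mathcomp Require Import all_classical all_reals all_analysis.
From mathcomp Require Import ring lra.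
Import Order.TTheory GRing.Theory Num.Theory.
Import numFieldNormedType.Exports.
Local Open Scope ring_scope.

Set Implicit Arguments. Unset Strict Implicit.
Section H.
Variable R : realType.
Implicit Types (k : nat).

Lemma qformDl n (a b c : 'cV[R]_n) Q : qform (a + b) Q c = qform a Q c + qform b Q c.
Proof. by rewrite /qform linearD /= !mulmxDl mxE. Qed.
Lemma qformDr n (a b c : 'cV[R]_n) Q : qform c Q (a + b) = qform c Q a + qform c Q b.
Proof. by rewrite /qform !mulmxDr mxE. Qed.
Lemma qformZl n (a : 'cV[R]_n) t Q c : qform (t *: a) Q c = t * qform a Q c.
Proof. by rewrite /qform linearZ /= -!scalemxAl mxE. Qed.
Lemma qformZr n (a : 'cV[R]_n) t Q c : qform c Q (t *: a) = t * qform c Q a.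
Proof. by rewrite /qform -!scalemxAr mxE. Qed.
Lemma qformDm n (a c : 'cV[R]_n) Q1 Q2 : qform a (Q1 + Q2) c = qform a Q1 c + qform a Q2 c.
Proof. by rewrite /qform mulmxDr mulmxDl mxE. Qed.
Lemma qformZm n (a c : 'cV[R]_n) t Q : qform a (t *: Q) c = t * qform a Q c.
Proof. by rewrite /qform -scalemxAr -scalemxAl mxE. Qed.
Lemma qform0l n (c : 'cV[R]_n) Q : qform 0 Q c = 0.
Proof. by rewrite /qform trmx0 !mul0mx mxE. Qed.
Lemma qform_sym n (a c : 'cV[R]_n) Q : Q^T = Q -> qform a Q c = qform c Q a.
Proof.
move=> sQ; rewrite /qform.
have -> : c^T *m Q *m a = (a^T *m Q *m c)^T by rewrite !trmx_mul trmxK sQ mulmxA.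
by rewrite [in RHS]mxE.
Qed.
Lemma qform_block n (a b : 'cV[R]_n) Q11 Q12 Q21 Q22 :
  qform (col_mx a b) (block_mx Q11 Q12 Q21 Q22) (col_mx a b) =
  qform a Q11 a + qform a Q12 b + qform b Q21 a + qform b Q22 b.
Proof.
rewrite /qform tr_col_mx mul_row_block mul_row_col !mulmxDl !mxE.
lra.
Qed.

Lemma CS n (Q : 'M[R]_n) v w : Q^T = Q -> (forall z, 0 <= qform z Q z) ->
  qform v Q w ^+ 2 <= qform v Q v * qform w Q w.
Proof.
move=> sQ psd.
have E t : qform (v + t *: w) Q (v + t *: w) =
   qform v Q v + 2 * t * qform v Q w + t ^+ 2 * qform w Q w.
  rewrite qformDl !qformDr !qformZl !qformZr (@qform_sym _ w v Q sQ). ring.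
set a := qform v Q v; set b := qform v Q w; set c := qform w Q w.
have Ht t : 0 <= a + 2 * t * b + t ^+ 2 * c by rewrite -E.
have c0 : 0 <= c by apply: psd.
have a0 : 0 <= a by apply: psd.
case: (ltrgt0P c) => [cp|cn|c00]; last first.
- case: (eqVneq b 0) => [->|bn0]; first by rewrite expr0n /= mulr_ge0.
  have := Ht (- (a + 1) / (2 * b)); rewrite c00 mulr0 addr0.
  have -> : 2 * (- (a + 1) / (2 * b)) * b = - (a + 1) by field; rewrite bn0.
  by move=> h; exfalso; move: h; apply/negP; rewrite -ltNge; lra.
- by rewrite ltNge c0 in cn.
- have := Ht (- b / c).
  have -> : a + 2 * (- b / c) * b + (- b / c) ^+ 2 * c = (a * c - b ^+ 2) / c.
    by field; rewrite gt_eqF.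
  move=> H; have := mulr_ge0 H (ltW cp); by rewrite divfK ?gt_eqF // subr_ge0.
Qed.

Lemma term_le n (v : 'cV[R]_n) i : v i 0 ^+ 2 <= \sum_(k < n) v k 0 ^+ 2.
Proof.
rewrite (bigD1 i) //= lerDl; apply: sumr_ge0 => k _; exact: sqr_ge0.
Qed.

Lemma sq_eq n (v : 'cV[R]_n) : (v^T *m v) 0 0 = \sum_(k < n) v k 0 ^+ 2.
Proof. by rewrite mxE; apply: eq_bigr => k _; rewrite mxE expr2. Qed.

Lemma qform_bound n (v : 'cV[R]_n) Q :
  qform v Q v <= (\sum_i \sum_j `|Q i j|) * \sum_(k < n) v k 0 ^+ 2.
Proof.
set s := \sum_(k < n) v k 0 ^+ 2.
rewrite exchange_big /qform mxE big_distrl /=; apply: ler_sum => j _.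
rewrite mxE big_distrl /= big_distrl /=; apply: ler_sum => i _.
rewrite mxE.
have Hi := term_le v i; have Hj := term_le v j.
have H2 : `|v i 0| * `|v j 0| <= s.
  have := sqr_ge0 (`|v i 0| - `|v j 0|).
  rewrite -(real_normK (num_real (v i 0))) -(real_normK (num_real (v j 0))) in Hi Hj.
  rewrite !expr2 in Hi Hj *; move=> H; rewrite /s; nra.
apply: le_trans (ler_norm _) _.
rewrite !normrM -mulrA mulrC -mulrA [X in _ <= X]mulrC.
rewrite [X in _ <= X]mulrC; apply: ler_wpM2l => //; by rewrite mulrC.
Qed.

Lemma pd_psd n (P : 'M[R]_n) : posdef P -> forall z, 0 <= qform z P z.
Proof.
case=> _ pd z; case: (eqVneq z 0) => [->|nz]; first by rewrite qform0l.
exact/ltW/pd.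
Qed.

Lemma pd_unit n (P : 'M[R]_n) : posdef P -> P \in unitmx.
Proof.
case=> sP pd; rewrite unitmxE unitfE; apply/negP => /det0P [u un0 uP].
have wn0 : u^T != 0 by apply: contra un0 => /eqP h; rewrite -(trmxK u) h trmx0.
have := pd _ wn0; rewrite /qform trmxK uP mul0mx mxE ltxx //.
Qed.

Lemma pd_lower n (P : 'M[R]_n) : posdef P ->
  exists S, 0 <= S /\ forall v : 'cV[R]_n, \sum_(k < n) v k 0 ^+ 2 <= S * qform v P v.
Proof.
move=> hP; have Pu := pd_unit hP; have psd := pd_psd hP.
set Q' := (invmx P)^T.
exists (\sum_i \sum_j `|Q' i j|); split.
  by apply: sumr_ge0 => i _; apply: sumr_ge0 => j _.
move=> v; set S := \sum_i _; set s := \sum_(k < n) _.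
have S0 : 0 <= S by apply: sumr_ge0 => i _; apply: sumr_ge0 => j _.
set w := invmx P *m v.
have hb : qform v P w = s by rewrite /qform /w mulmxA -(mulmxA _ P) mulmxV // mulmx1 sq_eq.
have hc : qform w P w = qform v Q' v.
  by rewrite /qform /w /Q' trmx_mul -!mulmxA (mulmxA P) mulmxV // mul1mx.
have := CS v w hP.1 psd; rewrite hb hc => H.
have Hc := qform_bound v Q'; rewrite -/S -/s in Hc.
have a0 := psd v.
have s0 : 0 <= s by apply: sumr_ge0 => k _; exact: sqr_ge0.
case: (eqVneq s 0) => [->|sn0]; first by rewrite mulr_ge0.
have sp : 0 < s by rewrite lt_def sn0 s0.
have : s * s <= (qform v P v * S) * s.
  rewrite -expr2 -mulrA; apply: le_trans H _; exact: ler_wpM2l.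
by rewrite ler_pM2r // mulrC.
Qed.

Lemma qformBm n (a c : 'cV[R]_n) Q1 Q2 : qform a (Q1 - Q2) c = qform a Q1 c - qform a Q2 c.
Proof. by rewrite qformDm -scaleN1r qformZm mulN1r. Qed.
End H.

Theorem theorem1 (R : realType) (n : nat) (f : 'cV[R]_n -> R) (L m : R)
  (xs : 'cV[R]_n) (mu delta alpha c1 c2 : R)
  (x : nat -> 'cV[R]_n) (beta : nat -> R)
  (xis us ys : 'cV[R]_n) (ss : R)
  (N : 'M[R]_(n + n)) (h rho : R) (P : 'M[R]_n) :
  (forall z, differentiable f z) ->
  0 < m -> m <= L ->
  L_smooth f L -> strongly_convex f m ->
  (forall z, f xs <= f z) -> (forall z, f z = f xs -> z = xs) ->
  0 < mu -> mu < 2 -> 0 < delta -> 0 < alpha -> 0 < c1 -> c1 <= c2 ->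
  (forall k, (0 < k)%N -> 0 < beta k) ->
  (forall k, (0 < k)%N ->
     c1 <= beta k * (norm2 (x k - x k.-1) + delta) `^ (1 - mu) <= c2) ->
  (forall k, (0 < k)%N ->
     x k.+1 = x k - alpha *:
       ((beta k * (norm2 (x k - x k.-1) + delta) `^ (1 - mu)) *: grad f (x k))) ->
  let A : 'M[R]_n := 1%:M in
  let B : 'M[R]_n := (- alpha)%:M in
  let C : 'M[R]_n := 1%:M in
  let E : 'M[R]_n := 1%:M in
  let u k := (beta k * (norm2 (x k - x k.-1) + delta) `^ (1 - mu)) *: grad f (x k) in
  (* 1. fixed points *)
  xis = A *m xis + B *m us -> ys = C *m xis -> us = ss *: grad f ys ->
  xs = E *m xis -> xs = ys ->
  (* 2. quadratic constraint *)
  sym_mx N ->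
  (forall k, (0 < k)%N ->
     let e := col_mx (x k - xis) (u k - us) in qform e N e >= 0) ->
  (* 3. LMI *)
  0 <= h -> 0 < rho -> rho < 1 -> posdef P ->
  nsd (block_mx (A^T *m P *m A - rho ^+ 2 *: P) (A^T *m P *m B)
                (B^T *m P *m A) (B^T *m P *m B) + h *: N) ->
  exists c : R, 0 < c /\
    forall k, (0 < k)%N -> norm2 (x k - xs) <= c * rho ^+ k.
Proof.
Proof.
move=> diff m0 mL Ls sc xmin xuniq mu0 mu2 d0 a0 c10 c12 bpos bbnd rec A B C E u
  fix1 fix2 fix3 fix4 fix5 sN qN h0 rho0 rho1 hP lmi.
rewrite /A /B mul1mx mul_scalar_mx in fix1.
have us0 : us = 0.
  have : xis + (-alpha) *: us = xis + 0 by rewrite addr0 -fix1.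
  move/addrI/eqP; rewrite scaler_eq0 oppr_eq0 (gt_eqF a0) /=; by move/eqP.
have xsE : xs = xis by rewrite fix4 /E mul1mx.
have psd := pd_psd hP.
set V := fun k => qform (x k - xis) P (x k - xis).
have step : forall k, (0 < k)%N -> V k.+1 <= rho ^+ 2 * V k.
  move=> k k0.
  have hx : x k.+1 - xis = (x k - xis) + (-alpha) *: u k.
    by rewrite rec // /u scaleNr addrAC.
  have H := lmi (col_mx (x k - xis) (u k - us)).
  have := qN k k0; rewrite /= us0 subr0 => qNk.
  rewrite us0 subr0 in H.
  move: H qNk; rewrite /V hx; move: (x k - xis) (u k) => a b H qNk.
  move: H.
  rewrite qformDm qformZm qform_block /A /B trmx1 tr_scalar_mx !mul1mx !mulmx1.
  rewrite mul_mx_scalar mul_scalar_mx -scalemxAl mul_mx_scalar.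
  rewrite qformBm !qformZm !qformDl !qformDr !qformZl !qformZr.
  set q := qform _ N _.
  move=> H.
  have hq : 0 <= h * q by apply: mulr_ge0.
  nra.
have iter : forall j, V j.+1 <= (rho ^+ 2) ^+ j * V 1%N.
  elim=> [|j IH]; first by rewrite expr0 mul1r.
  apply: (le_trans (step j.+1 (ltn0Sn j))).
  by rewrite [rho ^+ 2 ^+ j.+1]exprS -mulrA ler_pM2l ?exprn_gt0.
have [S [S0 HS]] := pd_lower hP.
have V10 : 0 <= V 1%N by apply: psd.
set K := S * V 1%N / rho ^+ 2.
have K0 : 0 <= K by apply: divr_ge0; [apply: mulr_ge0|apply: sqr_ge0].
exists (Num.sqrt K + 1); split.
  by apply: lt_le_trans (ltr01) _; rewrite lerDr sqrtr_ge0.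
case=> [//|j] _.
rewrite /norm2 xsE.
have H1 := HS (x j.+1 - xis).
have H2 : S * qform (x j.+1 - xis) P (x j.+1 - xis) <= K * (rho ^+ j.+1) ^+ 2.
  apply: le_trans (ler_wpM2l S0 (iter j)) _.
  have e : (rho ^+ j.+1) ^+ 2 = rho ^+ 2 * (rho ^+ 2) ^+ j.
    by rewrite -!exprM -exprD mulSn mulnC.
  rewrite e /K le_eqVlt; apply/orP; left; apply/eqP.
  by field; rewrite gt_eqF.
have := le_trans H1 H2.
rewrite -(ler_sqrt _ (mulr_ge0 K0 (sqr_ge0 _))) sqrtrM // sqrtr_sqr (ger0_norm (exprn_ge0 _ (ltW rho0))).
move=> H3; apply: le_trans H3 _; apply: ler_wpM2r; first exact: exprn_ge0 (ltW rho0).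
by rewrite lerDl.
Qed.
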